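(* Let $m,n\in\mathbb N$, let $\Box=(n^m)$, and let $\lambda$ be a partition (possibly empty) such that $[\lambda^+]\subseteq[\Box]$, where $\lambda^+=(\lambda_1+1,\lambda_2,\dots,\lambda_{\ell(\lambda)})$. Then \[\frac{f_\lambda\, f_{\Box\setminus\lambda^+}}{f_{\lambda^+}\, f_{\Box\setminus\lambda}}=\frac{(m+\lambda_1)(n-\lambda_1)}{(|\lambda|+1)(mn-|\lambda|)}.\]
   Context: $f_\mu$ denotes the number of standard Young tableaux of shape $\mu$ ($f_\emptyset=1$); $[\mu]=\{(i,j):i\in[\ell(\mu)],j\in[\mu_i]\}$ is the Young diagram (matrix coordinates); for the empty partition $\lambda_1=0$. For $\Box=(n^m)$ and $[\mu]\subseteq[\Box]$, $\Box\setminus\mu$ is the partition with Young diagram $\{(m-i+1,n-j+1):(i,j)\in[\Box]\setminus[\mu]\}$. *)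

(* Defs.v *)
From HB Require Import structures.
From mathcomp Require Import all_boot all_order all_algebra.
Unset Strict Implicit. Unset Printing Implicit Defensive.

Definition is_partition (mu : seq nat) : bool :=
  sorted geq mu && all (fun x => 0 < x) mu.

Definition psize (mu : seq nat) : nat := sumn mu.

(* mu_1 (= 0 for the empty partition) *)
Definition part1 (mu : seq nat) : nat := head 0 mu.

(* Young diagram, 1-based matrix coordinates:
   (i,j) \in [mu]  iff  1 <= i <= l(mu) and 1 <= j <= mu_i. *)
Definition in_diag (mu : seq nat) (c : nat * nat) : bool :=
  [&& 0 < c.1, c.1 <= size mu, 0 < c.2 & c.2 <= nth 0 mu c.1.-1].

(* Standard Young tableaux of shape mu with N = |mu|: fillings T of the
   cells (i,j), 1 <= i,j <= N (which contain [mu]), by labels in 'I_(N+1),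
   with T = 0 outside [mu], T a bijection from [mu] onto {1..N}
   (injective with values in 1..N on [mu], which has N cells), strictly
   increasing along rows and down columns. *)
Definition cellN {N : nat} (c : 'I_N * 'I_N) : nat * nat :=
  ((nat_of_ord c.1).+1, (nat_of_ord c.2).+1).

Definition is_SYT (mu : seq nat) (T : {ffun 'I_(psize mu) * 'I_(psize mu) -> 'I_(psize mu).+1}) : bool :=
  [&& [forall c, ~~ in_diag mu (cellN c) ==> (nat_of_ord (T c) == 0%N)],
      [forall c, in_diag mu (cellN c) ==> (0 < T c)],
      [forall c, forall d,
         [&& in_diag mu (cellN c), in_diag mu (cellN d) & (T c == T d)] ==> (c == d)],
      [forall c, forall d,
         [&& in_diag mu (cellN c), in_diag mu (cellN d),
             (cellN d).1 == (cellN c).1 & (cellN d).2 == (cellN c).2.+1]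
           ==> (T c < T d)]
    & [forall c, forall d,
         [&& in_diag mu (cellN c), in_diag mu (cellN d),
             (cellN d).2 == (cellN c).2 & (cellN d).1 == (cellN c).1.+1]
           ==> (T c < T d)]].

Definition f_syt (mu : seq nat) : nat := #|[pred T | @is_SYT mu T]|.

Definition lplus (la : seq nat) : seq nat :=
  if la is a :: s then a.+1 :: s else [:: 1].

Definition box (m n : nat) : seq nat := nseq m n.

(* Box \ mu for Box = (n^m): the partition whose Young diagram is
   {(m-i+1, n-j+1) : (i,j) \in [Box] \ [mu]}; its row m-i+1 has length
   n - mu_i, so it is (n - mu_m, n - mu_(m-1), ..., n - mu_1) with zero
   parts removed. *)
Definition box_compl (m n : nat) (mu : seq nat) : seq nat :=
  [seq x <- rev [seq n - nth 0 mu i | i <- iota 0 m] | 0 < x].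

Definition diag_sub (mu nu : seq nat) : Prop :=
  forall c, in_diag mu c -> in_diag nu c.

(* Main.v *)
Require Import Defs.
From mathcomp Require Import all_boot all_order all_algebra.
From mathcomp Require Import ring zify.
Import GRing.Theory Num.Theory.
Set Implicit Arguments. Unset Strict Implicit. Unset Printing Implicit Defensive.

Lemma snth_dec (mu : seq nat) i j : sorted geq mu -> (i <= j)%N -> (nth 0 mu j <= nth 0 mu i)%N.
Proof.
move=> Hs hij; case: (ltnP j (size mu)) => hj; last by rewrite nth_default.
have hi : (i < size mu)%N by apply: leq_ltn_trans hj.
apply: (sorted_leq_nth (leT := geq)) => //.
- by move=> a b c /= h1 h2; apply: leq_trans h2 h1.
- by move=> a /=.
Qed.

Lemma nth_le_sum (mu : seq nat) i : (nth 0 mu i <= sumn mu)%N.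
Proof.
elim: mu i => [|a s IH] [|i] //=; first exact: leq_addr.
by apply: leq_trans (IH i) (leq_addl _ _).
Qed.

Lemma pos_lt_sum (mu : seq nat) i : sorted geq mu -> (0 < nth 0 mu i)%N -> (i < sumn mu)%N.
Proof.
elim: mu i => [|a s IH] [|i] Hs //=.
  by move=> h; apply: leq_trans h (leq_addr _ _).
move=> h.
have Hs' : sorted geq s by apply: (subseq_sorted _ (subseq_cons s a)) => //; move=> x y z /= h1 h2; apply: leq_trans h2 h1.
have := IH i Hs' h.
have ha : (nth 0 s i <= a)%N.
  by have := snth_dec Hs (leq0n i.+1) => /=.
have a0 : (0 < a)%N by apply: leq_trans h ha.
move=> hl; rewrite -addn1 addnC; apply: leq_add => //.
Qed.

Lemma diag_bound (mu : seq nat) i j : sorted geq mu -> (j < nth 0 mu i)%N ->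
  (i < sumn mu)%N /\ (j < sumn mu)%N.
Proof.
move=> Hs h; split.
  by apply: pos_lt_sum => //; apply: leq_ltn_trans h.
by apply: leq_trans h (nth_le_sum _ _).
Qed.

Definition SYTk (K : nat) (mu : seq nat) (T : {ffun 'I_K * 'I_K -> 'I_K.+1}) : bool :=
  [&& [forall c, ~~ in_diag mu (cellN c) ==> (nat_of_ord (T c) == 0%N)],
      [forall c, in_diag mu (cellN c) ==> (0 < T c)],
      [forall c, forall d,
         [&& in_diag mu (cellN c), in_diag mu (cellN d) & (T c == T d)] ==> (c == d)],
      [forall c, forall d,
         [&& in_diag mu (cellN c), in_diag mu (cellN d),
             (cellN d).1 == (cellN c).1 & (cellN d).2 == (cellN c).2.+1]
           ==> (T c < T d)]
    & [forall c, forall d,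
         [&& in_diag mu (cellN c), in_diag mu (cellN d),
             (cellN d).2 == (cellN c).2 & (cellN d).1 == (cellN c).1.+1]
           ==> (T c < T d)]].
Arguments SYTk : clear implicits.

Definition cnt (K : nat) (mu : seq nat) : nat :=
  #|[pred T : {ffun 'I_K * 'I_K -> 'I_K.+1} | SYTk K mu T]|.

Lemma f_syt_cnt mu : f_syt mu = cnt (psize mu) mu.
Proof. by []. Qed.

Lemma in_diagE K mu (c : 'I_K * 'I_K) : in_diag mu (cellN c) = (c.2 < nth 0 mu c.1)%N.
Proof.
rewrite /in_diag /cellN /=.
by case: (ltnP c.1 (size mu)) => h //=; rewrite nth_default.
Qed.

Definition tf K (T : {ffun 'I_K * 'I_K -> 'I_K.+1}) (i j : nat) : nat :=
  match @insub _ (fun x => x < K)%N 'I_K i, @insub _ (fun x => x < K)%N 'I_K j with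
  | Some a, Some b => val (T (a, b))
  | _, _ => 0%N
  end.

Lemma tf_ord K (T : {ffun 'I_K * 'I_K -> 'I_K.+1}) (a b : 'I_K) : tf T a b = T (a, b).
Proof. by rewrite /tf !valK. Qed.

Lemma tf_out K (T : {ffun 'I_K * 'I_K -> 'I_K.+1}) i j : ~~ ((i < K) && (j < K))%N -> tf T i j = 0%N.
Proof.
rewrite negb_and /tf => /orP [h|h]; first by rewrite insubF //; apply/negbTE.
by case: insubP => // *; rewrite insubF //; apply/negbTE.
Qed.

Lemma tf_le K (T : {ffun 'I_K * 'I_K -> 'I_K.+1}) i j : (tf T i j <= K)%N.
Proof.
case: (boolP ((i < K) && (j < K))%N) => [/andP [hi hj]|h]; last by rewrite tf_out.
by rewrite -[i]/(val (Ordinal hi)) -[j]/(val (Ordinal hj)) tf_ord -ltnS.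
Qed.

Lemma tf_ext K (T1 T2 : {ffun 'I_K * 'I_K -> 'I_K.+1}) :
  (forall i j, (i < K)%N -> (j < K)%N -> tf T1 i j = tf T2 i j) -> T1 = T2.
Proof.
move=> H; apply/ffunP => [[a b]]; apply: val_inj => /=.
by rewrite -!tf_ord H.
Qed.

Definition NSYT (mu : seq nat) (t : nat -> nat -> nat) : Prop :=
 [/\ (forall i j, ~~ (j < nth 0 mu i)%N -> t i j = 0%N),
     (forall i j, (j < nth 0 mu i)%N -> (0 < t i j)%N),
     (forall i j i' j', (j < nth 0 mu i)%N -> (j' < nth 0 mu i')%N -> t i j = t i' j' ->
        i = i' /\ j = j'),
     (forall i j, (j.+1 < nth 0 mu i)%N -> (t i j < t i j.+1)%N)
   & (forall i j, (j < nth 0 mu i.+1)%N -> (t i j < t i.+1 j)%N)].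

Lemma SYTkP K mu (T : {ffun 'I_K * 'I_K -> 'I_K.+1}) : sorted geq mu -> psize mu = K -> reflect (NSYT mu (tf T)) (SYTk K mu T).
Proof.
move=> Hs HK.
have bnd : forall i j, (j < nth 0 mu i)%N -> (i < K)%N /\ (j < K)%N.
  by move=> i j h; rewrite -HK; apply: diag_bound.
apply: (iffP and5P).
- case=> /forallP H1 /forallP H2 /forallP H3 /forallP H4 /forallP H5; split.
  + move=> i j h; case: (boolP ((i < K) && (j < K))%N) => [/andP [hi hj]|hh]; last by rewrite tf_out.
    have := H1 (Ordinal hi, Ordinal hj); rewrite in_diagE /= h /= => /eqP.
    by rewrite -[i]/(val (Ordinal hi)) -[j]/(val (Ordinal hj)) tf_ord.
  + move=> i j h; have [hi hj] := bnd _ _ h.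
    have := H2 (Ordinal hi, Ordinal hj); rewrite in_diagE /= h /=.
    by rewrite -[i]/(val (Ordinal hi)) -[j]/(val (Ordinal hj)) tf_ord.
  + move=> i j i' j' h h' e; have [hi hj] := bnd _ _ h; have [hi' hj'] := bnd _ _ h'.
    have /forallP := H3 (Ordinal hi, Ordinal hj) => /(_ (Ordinal hi', Ordinal hj')).
    rewrite !in_diagE /= h h' /=.
    move: e; rewrite -[i]/(val (Ordinal hi)) -[j]/(val (Ordinal hj)).
    rewrite -[i']/(val (Ordinal hi')) -[j']/(val (Ordinal hj')) !tf_ord => e.
    move/val_inj: e => e.
    by rewrite e eqxx /= => /eqP [e1 e2]; split; [rewrite e1 | rewrite e2].
  + move=> i j h; have [hi hj] := bnd _ _ h.
    have hj0 : (j < K)%N by apply: ltnW.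
    have /forallP := H4 (Ordinal hi, Ordinal hj0) => /(_ (Ordinal hi, Ordinal hj)).
    rewrite !in_diagE /= h (ltnW h) /= !eqxx /=.
    by rewrite -[i]/(val (Ordinal hi)) -[j]/(val (Ordinal hj0)) -[j.+1]/(val (Ordinal hj)) !tf_ord.
  + move=> i j h; have [hi hj] := bnd _ _ h.
    have h0 : (j < nth 0 mu i)%N by apply: leq_trans h (snth_dec Hs (leqnSn i)).
    have hi0 : (i < K)%N by apply: ltnW.
    have /forallP := H5 (Ordinal hi0, Ordinal hj) => /(_ (Ordinal hi, Ordinal hj)).
    rewrite !in_diagE /= h h0 /= !eqxx /=.
    by rewrite -[i]/(val (Ordinal hi0)) -[j]/(val (Ordinal hj)) -[i.+1]/(val (Ordinal hi)) !tf_ord.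
- case=> H1 H2 H3 H4 H5; split.
  + apply/forallP => [[a b]]; rewrite in_diagE /=; apply/implyP => h.
    by rewrite -tf_ord H1.
  + apply/forallP => [[a b]]; rewrite in_diagE /=; apply/implyP => h.
    by rewrite -tf_ord H2.
  + apply/forallP => [[a b]]; apply/forallP => [[a' b']]; rewrite !in_diagE /=.
    apply/implyP => /and3P [h h' /eqP e].
    have := H3 _ _ _ _ h h'; rewrite !tf_ord e => /(_ erefl) [e1 e2].
    by apply/eqP; congr (_, _); apply: val_inj.
  + apply/forallP => [[a b]]; apply/forallP => [[a' b']]; rewrite !in_diagE /=.
    apply/implyP => /and4P [h h' /eqP [e1] /eqP [e2]].
    have := H4 a b; rewrite -!tf_ord e1 e2; apply; by rewrite -e2 -e1.
  + apply/forallP => [[a b]]; apply/forallP => [[a' b']]; rewrite !in_diagE /=.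
    apply/implyP => /and4P [h h' /eqP [e1] /eqP [e2]].
    have := H5 a b; rewrite -!tf_ord e1 e2; apply; by rewrite -e2 -e1.
Qed.

Lemma sum_ext0 (F : nat -> nat) N M : (N <= M)%N -> (forall i, (N <= i)%N -> (i < M)%N -> F i = 0%N) ->
  (\sum_(0 <= i < M) F i = \sum_(0 <= i < N) F i)%N.
Proof.
move=> hNM H; rewrite (big_cat_nat (leq0n N) hNM) /=.
have -> : (\sum_(N <= i < M) F i = 0)%N.
  by rewrite big_nat_cond big1 // => i /andP [/andP [h1 h2] _]; apply: H.
by rewrite addn0.
Qed.

Lemma sum_nth_mu (mu : seq nat) N : sorted geq mu -> (psize mu <= N)%N ->
  (\sum_(i < N) nth 0 mu i)%N = psize mu.
Proof.
move=> Hs hN.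
have Z : forall i, (psize mu <= i)%N -> nth 0 mu i = 0%N.
  move=> i hi; apply/eqP; rewrite -leqn0 leqNgt; apply/negP => h.
  by have := pos_lt_sum Hs h; rewrite ltnNge hi.
rewrite [RHS]/psize sumnE (big_nth 0) -(big_mkord xpredT (fun i => nth 0 mu i)).
rewrite (@sum_ext0 _ (psize mu) N) //; last by move=> i h _; apply: Z.
case: (leqP (size mu) (psize mu)) => hs.
  rewrite (@sum_ext0 _ (size mu) (psize mu)) //.
  by move=> i h _; rewrite nth_default.
rewrite [RHS](@sum_ext0 _ (psize mu) (size mu)) ?(ltnW hs) //.
by move=> i h _; apply: Z.
Qed.

Lemma sum_lt (N x : nat) : (x <= N)%N -> (\sum_(j < N) (if (j < x)%N then 1 else 0))%N = x.
Proof.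
move=> h; rewrite -(big_mkord xpredT (fun j => if (j < x)%N then 1 else 0)%N).
rewrite (@sum_ext0 _ x N) //; last by move=> i h1 _; rewrite ltnNge h1.
rewrite (eq_big_nat _ _ (F2 := fun _ => 1%N)); last by move=> i /andP [_ ->].
by rewrite sum_nat_const_nat subn0 muln1.
Qed.

Lemma diag_card (mu : seq nat) N : sorted geq mu -> (psize mu <= N)%N ->
  #|[pred c : 'I_N * 'I_N | (c.2 < nth 0 mu c.1)%N]| = psize mu.
Proof.
move=> Hs hN.
rewrite -sum1_card big_mkcond /= -(pair_big xpredT xpredT (fun (i j : 'I_N) => if (j < nth 0 mu i)%N then 1 else 0)%N) /=.
rewrite -[RHS](sum_nth_mu Hs hN); apply: eq_bigr => i _.
apply: sum_lt; apply: leq_trans (nth_le_sum _ _) hN.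
Qed.

Lemma max_cell K mu (T : {ffun 'I_K.+1 * 'I_K.+1 -> 'I_K.+2}) : sorted geq mu -> psize mu = K.+1 ->
  NSYT mu (tf T) -> exists i j, (j < nth 0 mu i)%N /\ tf T i j = K.+1.
Proof.
move=> Hs HK [H1 H2 H3 H4 H5].
pose D := [set c : 'I_K.+1 * 'I_K.+1 | (c.2 < nth 0 mu c.1)%N].
have cD : #|D| = K.+1 by rewrite cardsE diag_card // HK.
have inj : {in D &, injective (fun c => T c)}.
  move=> [a b] [a' b']; rewrite !inE /= => h h' e.
  have := H3 _ _ _ _ h h'; rewrite !tf_ord e => /(_ erefl) [e1 e2].
  by congr (_, _); apply: val_inj.
have cI : #|(fun c => T c) @: D| = K.+1 by rewrite card_in_imset.
have sub : (fun c => T c) @: D \subset [set~ (ord0 : 'I_K.+2)].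
  apply/subsetP => v /imsetP [[a b]]; rewrite inE /= => h ->.
  rewrite !inE; apply/negP => /eqP e.
  by have := H2 _ _ h; rewrite tf_ord e.
have cC : #|[set~ (ord0 : 'I_K.+2)]| = K.+1 by rewrite cardsC1 card_ord.
have E : (fun c => T c) @: D = [set~ ord0].
  by apply/eqP; rewrite eqEcard sub cI cC leqnn.
have : (ord_max : 'I_K.+2) \in [set~ ord0] by rewrite !inE.
rewrite -E => /imsetP [[a b]]; rewrite inE /= => h e.
by exists a, b; split => //; rewrite tf_ord -e.
Qed.

Definition corner (mu : seq nat) (r : nat) : bool :=
  (0 < nth 0 mu r)%N && (nth 0 mu r.+1 < nth 0 mu r)%N.
Definition decr (mu : seq nat) (r : nat) : seq nat := set_nth 0 mu r (nth 0 mu r).-1.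

Lemma nth_decr mu r i : nth 0 (decr mu r) i = if i == r then (nth 0 mu r).-1 else nth 0 mu i.
Proof. by rewrite /decr nth_set_nth. Qed.

Lemma corner_size mu r : corner mu r -> (r < size mu)%N.
Proof.
case/andP => h _; case: (ltnP r (size mu)) => // hs.
by rewrite nth_default in h.
Qed.

Lemma size_decr mu r : corner mu r -> size (decr mu r) = size mu.
Proof.
move=> /corner_size h; rewrite /decr size_set_nth; exact/maxn_idPr.
Qed.

Lemma sorted_decr mu r : sorted geq mu -> corner mu r -> sorted geq (decr mu r).
Proof.
move=> Hs Hc; have Hc' := Hc; case/andP: Hc' => h0 h1.
apply/(sortedP 0) => i; rewrite size_decr // => hi.
have := (sortedP 0 Hs) i hi; rewrite /= !nth_decr.
case: ifP => /eqP e2; case: ifP => /eqP e1; subst => //; lia.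
Qed.

Lemma psize_decr mu r K : corner mu r -> psize mu = K.+1 -> psize (decr mu r) = K.
Proof.
move=> Hc HK; have := corner_size Hc; case/andP: Hc => h0 _ hs.
rewrite /psize /decr sumn_set_nth_ltn // -/(psize mu) HK.
have : (nth 0 mu r <= K.+1)%N by rewrite -HK nth_le_sum.
move: h0; lia.
Qed.

Lemma tf_ffun K (h : nat -> nat -> nat) : (forall i j, (h i j <= K)%N) -> forall i j,
  tf ([ffun c : 'I_K * 'I_K => (inord (h c.1 c.2) : 'I_K.+1)]) i j =
  if ((i < K) && (j < K))%N then h i j else 0%N.
Proof.
move=> hb i j; case: (boolP ((i < K) && (j < K))%N) => [/andP [hi hj]|hh]; last by rewrite tf_out.
by rewrite -[i]/(val (Ordinal hi)) -[j]/(val (Ordinal hj)) tf_ord ffunE /= inordK // ltnS.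
Qed.

Definition shrink K (T : {ffun 'I_K.+1 * 'I_K.+1 -> 'I_K.+2}) : {ffun 'I_K * 'I_K -> 'I_K.+1} :=
  [ffun c : 'I_K * 'I_K => inord (if tf T c.1 c.2 == K.+1 then 0 else tf T c.1 c.2)].
Definition grow K (r c0 : nat) (T' : {ffun 'I_K * 'I_K -> 'I_K.+1}) : {ffun 'I_K.+1 * 'I_K.+1 -> 'I_K.+2} :=
  [ffun c : 'I_K.+1 * 'I_K.+1 => inord (if ((c.1 : nat) == r) && ((c.2 : nat) == c0) then K.+1 else tf T' c.1 c.2)].

Lemma tf_shrink K (T : {ffun 'I_K.+1 * 'I_K.+1 -> 'I_K.+2}) i j :
  tf (shrink T) i j = if ((i < K) && (j < K))%N then (if tf T i j == K.+1 then 0%N else tf T i j) else 0%N.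
Proof.
rewrite /shrink (@tf_ffun K (fun a b => if tf T a b == K.+1 then 0%N else tf T a b)) //.
move=> a b; case: eqP => // ne; have := tf_le T a b; rewrite leq_eqVlt ltnS => /orP [/eqP //|//].
Qed.

Lemma tf_grow K r c0 (T' : {ffun 'I_K * 'I_K -> 'I_K.+1}) i j :
  tf (grow r c0 T') i j = if ((i < K.+1) && (j < K.+1))%N then
     (if (i == r) && (j == c0) then K.+1 else tf T' i j) else 0%N.
Proof.
rewrite /grow (@tf_ffun K.+1 (fun a b => if (a == r) && (b == c0) then K.+1 else tf T' a b)) //.
move=> a b; case: ifP => // _; apply: leq_trans (tf_le T' a b) (leqnSn _).
Qed.

Lemma diag_decr mu r i j : corner mu r ->
  (j < nth 0 (decr mu r) i)%N = (j < nth 0 mu i)%N && ~~ ((i == r) && (j == (nth 0 mu r).-1)).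
Proof.
case/andP => h0 _; rewrite nth_decr.
case: (eqVneq i r) => [->|ne] /=; last by rewrite andbT.
apply/idP/idP.
- move=> h; apply/andP; split; first by apply: leq_trans h (leq_pred _).
  by apply/negP => /eqP e; rewrite e ltnn in h.
- case/andP => h /eqP ne; move: h0 h ne; lia.
Qed.

Lemma shrink_ok K mu r (T : {ffun 'I_K.+1 * 'I_K.+1 -> 'I_K.+2}) :
  sorted geq mu -> psize mu = K.+1 -> corner mu r ->
  SYTk K.+1 mu T -> tf T r (nth 0 mu r).-1 = K.+1 -> SYTk K (decr mu r) (shrink T).
Proof.
move=> Hs HK Hc HT Hmax.
have Hs' := sorted_decr Hs Hc; have HK' := psize_decr Hc HK.
have Hcr : ((nth 0 mu r).-1 < nth 0 mu r)%N by case/andP: Hc => h0 _; rewrite prednK.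
move/(SYTkP _ Hs HK): HT => [H1 H2 H3 H4 H5].
apply/(SYTkP _ Hs' HK').
have uniq : forall i j, tf T i j = K.+1 -> i = r /\ j = (nth 0 mu r).-1.
  move=> i j e.
  have hd : (j < nth 0 mu i)%N.
    by apply/negPn/negP => h; move: (H1 i j h); rewrite e.
  by apply: H3 hd Hcr _; rewrite e Hmax.
have bnd' : forall i j, (j < nth 0 (decr mu r) i)%N -> (i < K)%N /\ (j < K)%N.
  by move=> i j h; rewrite -HK'; apply: diag_bound.
have eqs : forall i j, (j < nth 0 (decr mu r) i)%N -> tf (shrink T) i j = tf T i j.
  move=> i j h; have [hi hj] := bnd' _ _ h.
  rewrite tf_shrink hi hj /=; case: eqP => // /uniq [e1 e2].
  by move: h; rewrite diag_decr // e1 e2 !eqxx andbF.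
split.
- move=> i j h; rewrite tf_shrink; case: ifP => // _; case: eqP => // ne.
  apply: H1; apply/negP => h'; move: h; rewrite diag_decr // h' /= negbK.
  by case/andP => /eqP e1 /eqP e2; apply: ne; rewrite e1 e2.
- move=> i j h; rewrite eqs //; apply: H2.
  by move: h; rewrite diag_decr // => /andP [].
- move=> i j i' j' h h'; rewrite !eqs //; apply: H3.
  + by move: h; rewrite diag_decr // => /andP [].
  + by move: h'; rewrite diag_decr // => /andP [].
- move=> i j h; have h0 : (j < nth 0 (decr mu r) i)%N by apply: ltnW.
  rewrite !eqs //; apply: H4.
  by move: h; rewrite diag_decr // => /andP [].
- move=> i j h; have h0 : (j < nth 0 (decr mu r) i)%N.
    by apply: leq_trans h (snth_dec Hs' (leqnSn i)).
  rewrite !eqs //; apply: H5.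
  by move: h; rewrite diag_decr // => /andP [].
Qed.

Lemma grow_shrink K mu r (T : {ffun 'I_K.+1 * 'I_K.+1 -> 'I_K.+2}) :
  sorted geq mu -> psize mu = K.+1 -> corner mu r ->
  SYTk K.+1 mu T -> tf T r (nth 0 mu r).-1 = K.+1 -> grow r (nth 0 mu r).-1 (shrink T) = T.
Proof.
move=> Hs HK Hc HT Hmax.
have Hs' := sorted_decr Hs Hc; have HK' := psize_decr Hc HK.
have Hcr : ((nth 0 mu r).-1 < nth 0 mu r)%N by case/andP: Hc => h0 _; rewrite prednK.
move/(SYTkP _ Hs HK): HT => [H1 H2 H3 H4 H5].
have uniq : forall i j, tf T i j = K.+1 -> i = r /\ j = (nth 0 mu r).-1.
  move=> i j e.
  have hd : (j < nth 0 mu i)%N.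
    by apply/negPn/negP => h; move: (H1 i j h); rewrite e.
  by apply: H3 hd Hcr _; rewrite e Hmax.
apply: tf_ext => i j hi hj; rewrite tf_grow hi hj /=.
case: ifP => [/andP [/eqP -> /eqP ->] //|ncr].
rewrite tf_shrink; case: ifP => [_|hg].
  case: eqP => // /uniq [e1 e2]; by rewrite e1 e2 !eqxx in ncr.
apply/esym; apply: H1; apply/negP => h.
have h' : (j < nth 0 (decr mu r) i)%N by rewrite diag_decr // h ncr.
have [hi' hj'] : (i < K)%N /\ (j < K)%N by rewrite -HK'; apply: diag_bound.
by rewrite hi' hj' in hg.
Qed.

Lemma shrink_grow K mu r (T' : {ffun 'I_K * 'I_K -> 'I_K.+1}) :
  sorted geq mu -> psize mu = K.+1 -> corner mu r ->
  SYTk K (decr mu r) T' -> shrink (grow r (nth 0 mu r).-1 T') = T'.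
Proof.
move=> Hs HK Hc HT.
have Hs' := sorted_decr Hs Hc; have HK' := psize_decr Hc HK.
move/(SYTkP _ Hs' HK'): HT => [H1 H2 H3 H4 H5].
apply: tf_ext => i j hi hj.
have hi1 : (i < K.+1)%N by apply: ltnW.
have hj1 : (j < K.+1)%N by apply: ltnW.
rewrite tf_shrink hi hj tf_grow hi1 hj1 /=.
case E: ((i == r) && (j == (nth 0 mu r).-1)).
  case/andP: E => /eqP e1 /eqP e2.
  by rewrite eqxx e1 e2 H1 // diag_decr // !eqxx andbF.
have := tf_le T' i j; case: eqP => // ->; by rewrite ltnn.
Qed.

Lemma grow_ok K mu r (T' : {ffun 'I_K * 'I_K -> 'I_K.+1}) :
  sorted geq mu -> psize mu = K.+1 -> corner mu r ->
  SYTk K (decr mu r) T' ->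
  SYTk K.+1 mu (grow r (nth 0 mu r).-1 T') && (tf (grow r (nth 0 mu r).-1 T') r (nth 0 mu r).-1 == K.+1).
Proof.
move=> Hs HK Hc HT.
have Hs' := sorted_decr Hs Hc; have HK' := psize_decr Hc HK.
have Hc' := Hc; case/andP: Hc' => h0 h1.
set c0 := (nth 0 mu r).-1.
have Hcr : (c0 < nth 0 mu r)%N by rewrite /c0 prednK.
move/(SYTkP _ Hs' HK'): HT => [H1 H2 H3 H4 H5].
have bnd : forall i j, (j < nth 0 mu i)%N -> (i < K.+1)%N /\ (j < K.+1)%N.
  by move=> i j h; rewrite -HK; apply: diag_bound.
have hg : forall i j, (j < nth 0 mu i)%N -> tf (grow r c0 T') i j =
    if (i == r) && (j == c0) then K.+1 else tf T' i j.
  by move=> i j h; have [hi hj] := bnd _ _ h; rewrite tf_grow hi hj.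
have le := tf_le T'.
have dd : forall i j, (j < nth 0 mu i)%N -> ~~ ((i == r) && (j == c0)) ->
    (j < nth 0 (decr mu r) i)%N.
  by move=> i j h n; rewrite diag_decr // h n.
apply/andP; split; last by rewrite hg // !eqxx.
apply/(SYTkP _ Hs HK); split.
- move=> i j h; rewrite tf_grow; case: ifP => // _.
  case: ifP => [/andP [/eqP e1 /eqP e2]|_].
    by rewrite e1 e2 Hcr in h.
  by apply: H1; rewrite diag_decr // negb_and (negbTE h).
- move=> i j h; rewrite hg //; case: ifP => // ncr.
  by apply: H2; apply: dd => //; rewrite ncr.
- move=> i j i' j' h h'; rewrite !hg //.
  case: ifP => [/andP [/eqP e1 /eqP e2]|n1]; case: ifP => [/andP [/eqP e1' /eqP e2']|n2].
  + by rewrite e1 e2 e1' e2'.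
  + move=> e; have := le i' j'; by rewrite -e ltnn.
  + move=> e; have := le i j; by rewrite e ltnn.
  + by apply: H3; apply: dd => //; rewrite ?n1 ?n2.
- move=> i j h; have h' : (j < nth 0 mu i)%N by apply: ltnW.
  rewrite !hg //.
  case: ifP => [/andP [/eqP e1 /eqP e2]|n1].
    by move: h; rewrite e1 e2 /c0; move: h0; lia.
  case: ifP => [_|n2]; first by rewrite ltnS.
  by apply: H4; apply: dd => //; rewrite n2.
- move=> i j h; have h' : (j < nth 0 mu i)%N by apply: leq_trans h (snth_dec Hs (leqnSn i)).
  rewrite !hg //.
  case: ifP => [/andP [/eqP e1 /eqP e2]|n1].
    by move: h; rewrite e1 e2 /c0; move: h0 h1; lia.
  case: ifP => [_|n2]; first by rewrite ltnS.
  by apply: H5; apply: dd => //; rewrite n2.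
Qed.

Lemma card_corner K mu r : sorted geq mu -> psize mu = K.+1 -> corner mu r ->
  #|[set T : {ffun 'I_K.+1 * 'I_K.+1 -> 'I_K.+2} | SYTk K.+1 mu T && (tf T r (nth 0 mu r).-1 == K.+1)]|
  = cnt K (decr mu r).
Proof.
move=> Hs HK Hc.
set A := [set T : {ffun 'I_K.+1 * 'I_K.+1 -> 'I_K.+2} | _].
have -> : cnt K (decr mu r) = #|[set T' | SYTk K (decr mu r) T']| by rewrite cardsE.
set B := [set T' | _].
have injA : {in A &, injective (@shrink K)}.
  move=> T1 T2; rewrite !inE => /andP [h1 /eqP e1] /andP [h2 /eqP e2] e.
  by rewrite -(grow_shrink Hs HK Hc h1 e1) -(grow_shrink Hs HK Hc h2 e2) e.
have injB : {in B &, injective (grow r (nth 0 mu r).-1)}.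
  move=> T1 T2; rewrite !inE => h1 h2 e.
  by rewrite -(shrink_grow Hs HK Hc h1) -(shrink_grow Hs HK Hc h2) e.
apply/eqP; rewrite eqn_leq; apply/andP; split.
- rewrite -(card_in_imset injA); apply: subset_leq_card; apply/subsetP => T' /imsetP [T].
  rewrite inE => /andP [h /eqP e] ->; rewrite inE; exact: shrink_ok.
- rewrite -(card_in_imset injB); apply: subset_leq_card; apply/subsetP => T /imsetP [T'].
  rewrite inE => h ->; rewrite inE; exact: grow_ok.
Qed.

Lemma branching K mu : sorted geq mu -> psize mu = K.+1 ->
  cnt K.+1 mu = (\sum_(r < size mu | corner mu r) cnt K (decr mu r))%N.
Proof.
move=> Hs HK.
rewrite (eq_bigr (fun r : 'I_(size mu) =>
   \sum_(T in [set T : {ffun 'I_K.+1 * 'I_K.+1 -> 'I_K.+2} | SYTk K.+1 mu T])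
      (tf T r (nth 0 mu r).-1 == K.+1 : nat))%N); last first.
  move=> r hr; rewrite -(card_corner Hs HK hr) -sum1_card.
  rewrite big_mkcond [RHS]big_mkcond; apply: eq_bigr => T _; rewrite !inE.
  by case: (SYTk _ _ _); case: (_ == _).
rewrite exchange_big /= /cnt -cardsE -sum1_card; apply: eq_bigr => T.
rewrite inE => HT; move/(SYTkP _ Hs HK): (HT) => [H1 H2 H3 H4 H5].
have [i [j [hd hm]]] := max_cell Hs HK (SYTkP _ Hs HK HT).
have hj : j = (nth 0 mu i).-1.
  case: (ltnP j.+1 (nth 0 mu i)) => h; last by move: hd h; lia.
  by have := H4 _ _ h; rewrite hm; have := tf_le T i j.+1; lia.
have hci : corner mu i.
  apply/andP; split; first by move: hd; lia.
  case: (ltnP (nth 0 mu i.+1) (nth 0 mu i)) => // h.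
  have h' : (j < nth 0 mu i.+1)%N by apply: leq_trans hd h.
  by have := H5 _ _ h'; rewrite hm; have := tf_le T i.+1 j; lia.
have his : (i < size mu)%N := corner_size hci.
rewrite (bigD1 (Ordinal his)) //= -hj hm eqxx /= big1 // => r /andP [hr ne].
case: eqP => // e.
have hd' : (nth 0 mu r).-1 < nth 0 mu r by case/andP: hr => h0 _; rewrite prednK.
have := H3 _ _ _ _ hd hd'; rewrite e hm => /(_ erefl) [e1 e2].
by move: ne; rewrite -(inj_eq val_inj) /= e1 eqxx.
Qed.

Local Open Scope ring_scope.

Definition gg (a b : rat) : rat := 1 - (a - b)^-1.
Definition Gp (k : nat) (x : nat -> rat) (i : nat) : rat :=
  \prod_(j < k | (j : nat) != i) gg (x i) (x j).
Definition Qp (k : nat) (x : nat -> rat) (t : rat) : rat :=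
  \prod_(j < k) gg t (x j).
Definition distinctk (k : nat) (x : nat -> rat) : Prop :=
  forall a b : nat, (a < k)%N -> (b < k)%N -> a != b -> x a != x b.

Lemma distinctk_S k x : distinctk k.+1 x -> distinctk k x.
Proof. move=> H a b ha hb; apply: H; exact: ltnW. Qed.

Lemma distinctk_last k x : distinctk k.+1 x -> forall j, (j < k)%N -> x k != x j.
Proof.
move=> Hd j hj; apply: (Hd k j); [exact: ltnSn | exact: ltnW | by rewrite gtn_eqF].
Qed.

Lemma Gp_S k x i : (i < k)%N -> Gp k.+1 x i = Gp k x i * gg (x i) (x k).
Proof.
move=> hi; rewrite /Gp big_mkcond big_ord_recr /= -big_mkcond /=.
by rewrite gtn_eqF // mulr1.
Qed.

Lemma Gp_last k x : Gp k.+1 x k = Qp k x (x k).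
Proof.
rewrite /Gp /Qp big_mkcond big_ord_recr /= eqxx mulr1.
by apply: eq_bigr => j _; rewrite (ltn_eqF (ltn_ord j)).
Qed.

Lemma Qp_S k x t : Qp k.+1 x t = Qp k x t * gg t (x k).
Proof. by rewrite /Qp big_ord_recr. Qed.

Lemma lemA k x : distinctk k x -> forall t : rat, (forall j, (j < k)%N -> t != x j) ->
  t * Qp k x t = t - k%:R + \sum_(i < k) x i * Gp k x i / (x i - t).
Proof.
elim: k => [|k IH] Hd t Ht.
  by rewrite /Qp big_ord0 big_ord0 mulr1 subr0 addr0.
have Hd' := distinctk_S Hd.
have Ha := distinctk_last Hd.
have IHt := IH Hd' t (fun j hj => Ht j (ltnW hj)).
have IHa := IH Hd' (x k) Ha.
have Hta : t - x k != 0 by rewrite subr_eq0 Ht.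
have Hat : x k - t != 0 by rewrite subr_eq0 eq_sym Ht.
rewrite Qp_S big_ord_recr /= Gp_last.
rewrite (eq_bigr (fun i : 'I_k => x i * Gp k x i / (x i - t) * gg t (x k)
     - x i * Gp k x i / (x i - x k) / (x k - t))); last first.
  move=> i _; rewrite Gp_S //.
  have h1 : x i - t != 0 by rewrite subr_eq0; apply/negP => /eqP e; move: (Ht i (ltnW (ltn_ord i))); rewrite e eqxx.
  have h2 : x i - x k != 0 by rewrite subr_eq0 eq_sym Ha.
  rewrite /gg; field.
  by rewrite h1 h2 Hta Hat.
rewrite sumrB -mulr_suml -mulr_suml mulrA IHt IHa.
rewrite -[k.+1]addn1 natrD /gg; field.
by rewrite Hta Hat.
Qed.

Lemma lemB k x : distinctk k x ->
  \sum_(i < k) x i * Gp k x i = \sum_(i < k) x i - 'C(k, 2)%:R.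
Proof.
elim: k => [|k IH] Hd.
  by rewrite !big_ord0 bin0n subr0.
have Hd' := distinctk_S Hd.
have Ha := distinctk_last Hd.
have IHa := lemA Hd' Ha.
rewrite big_ord_recr /= Gp_last IHa.
rewrite (eq_bigr (fun i : 'I_k => x i * Gp k x i - x i * Gp k x i / (x i - x k))); last first.
  move=> i _; rewrite Gp_S //.
  have h2 : x i - x k != 0 by rewrite subr_eq0 eq_sym Ha.
  rewrite /gg; field.
  by rewrite h2.
rewrite sumrB IH // big_ord_recr /= binS bin1 natrD.
have -> : \sum_(i < k) x i * Gp k x i / (x i - x k) = - \sum_(i < k) x i * Gp k x i / (x k - x i).
  rewrite -sumrN; apply: eq_bigr => i _.
  have h2 : x i - x k != 0 by rewrite subr_eq0 eq_sym Ha.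
  have h3 : x k - x i != 0 by rewrite subr_eq0 Ha.
  field; by rewrite h2 h3.
ring.
Qed.
Definition Dk (k : nat) (x : nat -> rat) : rat :=
  \prod_(b < k) \prod_(a < b) (x a - x b).
Definition decf (x : nat -> rat) (i : nat) : nat -> rat :=
  fun j => if j == i then x j - 1 else x j.

Lemma Dk_S k x : Dk k.+1 x = Dk k x * \prod_(a < k) (x a - x k).
Proof. by rewrite /Dk big_ord_recr. Qed.

Lemma Dk_ext k x y : (forall a, (a < k)%N -> x a = y a) -> Dk k x = Dk k y.
Proof.
move=> H; apply: eq_bigr => b _; apply: eq_bigr => a _.
by rewrite !H // (ltn_trans (ltn_ord a) (ltn_ord b)).
Qed.

Lemma Dk_neq0 k x : distinctk k x -> Dk k x != 0.
Proof.
move=> Hd; rewrite prodf_seq_neq0; apply/allP => b _; apply/implyP => _.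
rewrite prodf_seq_neq0; apply/allP => a _; apply/implyP => _.
rewrite subr_eq0; apply: Hd; first exact: (ltn_trans (ltn_ord a) (ltn_ord b)).
  exact: ltn_ord.
by rewrite ltn_eqF.
Qed.

Lemma Dk_shift k x i : distinctk k x -> (i < k)%N ->
  Dk k (decf x i) = Dk k x * Gp k x i.
Proof.
elim: k => [//|k IH] Hd hi.
have Hd' := distinctk_S Hd.
have Ha := distinctk_last Hd.
rewrite !Dk_S.
have [hik|eik] : (i < k)%N \/ i = k.
  by move: hi; rewrite ltnS leq_eqVlt => /orP [/eqP ->|->]; [right|left].
2:{
  subst i; rewrite Gp_last /Qp.
  rewrite (@Dk_ext k (decf x k) x); last by move=> a ha; rewrite /decf ltn_eqF.
  rewrite -mulrA; congr (_ * _); rewrite -big_split /=; apply: eq_bigr => a _.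
  rewrite /decf eqxx ltn_eqF //.
  have h : x k - x a != 0 by rewrite subr_eq0 Ha.
  rewrite /gg; field; by rewrite h. }
- rewrite IH // Gp_S //.
  rewrite (bigD1 (Ordinal hik)) //= [in RHS](bigD1 (Ordinal hik)) //=.
  rewrite /decf eqxx gtn_eqF //.
  rewrite (eq_bigr (fun a : 'I_k => x a - x k)); last first.
    by move=> a /negPf ha; rewrite -(inj_eq val_inj) /= in ha; rewrite ha.
  have h : x i - x k != 0 by rewrite subr_eq0 eq_sym Ha.
  rewrite /gg; field; by rewrite h.
Qed.

Definition lv (k : nat) (nu : seq nat) (i : nat) : nat := (nth 0 nu i + (k.-1 - i))%N.
Definition lvr (k : nat) (nu : seq nat) : nat -> rat := fun i => (lv k nu i)%:R.

Lemma lv_dist k nu i j : sorted geq nu -> (i < j)%N -> (j < k)%N -> (lv k nu j < lv k nu i)%N.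
Proof.
move=> Hs hij hjk; have := snth_dec Hs (ltnW hij); rewrite /lv; lia.
Qed.

Lemma lvr_distinct k nu : sorted geq nu -> distinctk k (lvr k nu).
Proof.
move=> Hs a b ha hb ne; rewrite /lvr eqr_nat.
case: (ltngtP a b) => h.
- by rewrite gtn_eqF // lv_dist.
- by rewrite ltn_eqF // lv_dist.
- by rewrite h eqxx in ne.
Qed.

Lemma cnt0 nu : cnt 0 nu = 1%N.
Proof.
rewrite /cnt (eq_card (B := predT)); first by rewrite card_ffun card_ord exp1n.
move=> T; rewrite !inE /=.
by apply/and5P; split; apply/forallP => c; case: c => [[i hi] b]; exfalso; move: (hi); rewrite ltn0.
Qed.

Lemma prod_diff b : \prod_(a < b) ((b - a)%:R : rat) = (b`!)%:R.
Proof.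
rewrite (reindex_inj rev_ord_inj) /=.
rewrite (eq_bigr (fun a : 'I_b => ((a : nat).+1)%:R)); last first.
  move=> a _; congr (_%:R); have := ltn_ord a; lia.
rewrite -natr_prod; congr (_%:R).
elim: b => [|b IH]; first by rewrite big_ord0.
by rewrite big_ord_recr /= IH factS mulnC.
Qed.

Lemma sum_nth_k (nu : seq nat) k : (size nu <= k)%N -> (\sum_(i < k) nth 0 nu i)%N = psize nu.
Proof.
move=> hk; rewrite /psize sumnE (big_nth 0) -(big_mkord xpredT (fun i => nth 0 nu i)).
rewrite (@sum_ext0 _ (size nu) k) //.
by move=> i h _; rewrite nth_default.
Qed.

Lemma sum_rev_k k : (\sum_(i < k) (k.-1 - i))%N = 'C(k, 2).
Proof.
rewrite (reindex_inj rev_ord_inj) /=.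
rewrite (eq_bigr (fun i : 'I_k => (i : nat))); last by move=> i _; have := ltn_ord i; lia.
by rewrite -bin2_sum big_mkord.
Qed.

Lemma zero_term k nu r : sorted geq nu -> (size nu <= k)%N -> (r < k)%N -> ~~ corner nu r ->
  lvr k nu r * Gp k (lvr k nu) r = 0.
Proof.
move=> Hs hk hr nc.
have hdec := snth_dec Hs (leqnSn r).
case: (ltnP r.+1 k) => hr1.
  rewrite /Gp (bigD1 (Ordinal hr1)) /=; last by rewrite gtn_eqF.
  have -> : gg (lvr k nu r) (lvr k nu r.+1) = 0.
    rewrite /gg /lvr.
    have -> : lv k nu r = (lv k nu r.+1).+1.
      move: nc; rewrite /corner /lv negb_and -!leqNgt => /orP [h|h]; move: hdec h hr1; lia.
    by rewrite -addn1 natrD addrAC subrr add0r invr1 subrr.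
  by rewrite mul0r mulr0.
have e : r = k.-1 by move: hr hr1; lia.
have : (nth 0 nu r = 0)%N.
  move: nc; rewrite /corner negb_and -!leqNgt => /orP [h|h]; first by move: h; lia.
  have : (nth 0 nu r.+1 = 0)%N by rewrite nth_default //; move: hk hr1 e; lia.
  move: h; lia.
by rewrite /lvr /lv => ->; rewrite e subnn mul0r.
Qed.

Lemma lv_decr k nu r i : corner nu r -> lv k (decr nu r) i = if i == r then (lv k nu r).-1 else lv k nu i.
Proof.
move=> Hc; rewrite /lv nth_decr; case: eqP => // ->.
case/andP: Hc => h0 _; move: h0; lia.
Qed.

Lemma frob N : forall nu k, sorted geq nu -> (size nu <= k)%N -> psize nu = N ->
  (cnt N nu)%:R * \prod_(i < k) ((lv k nu i)`!)%:R = (N`!)%:R * Dk k (lvr k nu).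
Proof.
elim: N => [|N IH] nu k Hs hk HN.
  have nz : forall i, nth 0 nu i = 0%N.
    by move=> i; apply/eqP; rewrite -leqn0 -HN nth_le_sum.
  rewrite cnt0 mul1r fact0 mul1r.
  have -> : Dk k (lvr k nu) = \prod_(b < k) ((b : nat)`!)%:R.
    apply: eq_bigr => b _; rewrite -prod_diff; apply: eq_bigr => a _.
    rewrite /lvr /lv !nz !add0n -natrB; last by have := ltn_ord a; have := ltn_ord b; lia.
    congr (_%:R); have := ltn_ord a; have := ltn_ord b; lia.
  rewrite (reindex_inj rev_ord_inj) /=; apply: eq_bigr => i _.
  rewrite /lv nz add0n; congr ((_`!)%:R); have := ltn_ord i; lia.
rewrite branching // natr_sum mulr_suml.
have Hd := lvr_distinct (k:=k) Hs.
rewrite (eq_bigr (fun r : 'I_(size nu) => (N`!)%:R * Dk k (lvr k nu) *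
     (lvr k nu r * Gp k (lvr k nu) r))); last first.
  move=> r hr.
  have hrk : (r < k)%N by apply: leq_trans (corner_size hr) hk.
  have IHr := IH (decr nu r) k (sorted_decr Hs hr) (ltac:(by rewrite size_decr)) (psize_decr hr HN).
  have eP : \prod_(i < k) ((lv k nu i)`!)%:R = lvr k nu r * \prod_(i < k) ((lv k (decr nu r) i)`!)%:R.
    rewrite (bigD1 (Ordinal hrk)) //= [in RHS](bigD1 (Ordinal hrk)) //= mulrA.
    congr (_ * _).
      rewrite lv_decr // eqxx /lvr -natrM; congr (_%:R).
      have hp : (0 < lv k nu r)%N by case/andP: hr => h0 _; rewrite /lv; move: h0; lia.
      by rewrite -{1}(prednK hp) factS prednK.
    apply: eq_bigr => i hi; rewrite lv_decr //.
    by move: hi; rewrite -(inj_eq val_inj) /= => /negbTE ->.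
  rewrite eP mulrCA IHr.
  have eD : Dk k (lvr k (decr nu r)) = Dk k (lvr k nu) * Gp k (lvr k nu) r.
    rewrite -Dk_shift //; apply: Dk_ext => a ha.
    rewrite /decf /lvr lv_decr //; case: eqP => // ->.
    have hp : (0 < lv k nu r)%N by case/andP: hr => h0 _; rewrite /lv; move: h0; lia.
    by rewrite -{2}(prednK hp) -addn1 natrD addrK.
  by rewrite eD; ring.
rewrite -mulr_sumr.
have eS : \sum_(r < size nu | corner nu r) lvr k nu r * Gp k (lvr k nu) r
        = \sum_(r < k) lvr k nu r * Gp k (lvr k nu) r.
  rewrite (big_ord_widen_cond k (fun r => corner nu r) (fun r => lvr k nu r * Gp k (lvr k nu) r) hk).
  rewrite big_mkcond /=; apply: eq_bigr => r _.
  case: (boolP (corner nu r)) => hc /=.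
    by rewrite (corner_size hc).
  by rewrite zero_term.
rewrite eS lemB //.
have -> : \sum_(i < k) lvr k nu i = (N.+1 + 'C(k, 2))%:R.
  rewrite /lvr -natr_sum; congr (_%:R).
  rewrite /lv big_split /= sum_nth_k // sum_rev_k.
  by rewrite HN.
by rewrite natrD addrK factS natrM; ring.
Qed.

Lemma nth_filter_pos (s : seq nat) i : sorted geq s ->
  nth 0 [seq x <- s | (0 < x)%N] i = nth 0 s i.
Proof.
elim: s i => [|a s IH] i Hs //=.
have Hs' : sorted geq s by apply: (path_sorted (x := a)).
case: (posnP a) => [a0|apos].
  have z : forall j, nth 0 s j = 0%N.
    by move=> j; have := snth_dec Hs (leq0n j.+1); rewrite /= a0 leqn0 => /eqP.
  by rewrite a0 /= IH //; case: i => [|i] /=; rewrite !z.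
by case: i => //= i; rewrite IH.
Qed.

Lemma sumn_filter_pos (s : seq nat) : sumn [seq x <- s | (0 < x)%N] = sumn s.
Proof. by elim: s => [|a s IH] //=; case: (posnP a) => [->|] /=; rewrite IH. Qed.

Definition bl (m n : nat) (mu : seq nat) : seq nat := rev [seq (n - nth 0 mu i)%N | i <- iota 0 m].

Lemma nth_bl m n mu i : (i < m)%N -> nth 0 (bl m n mu) i = (n - nth 0 mu (m.-1 - i))%N.
Proof.
move=> hi; rewrite /bl nth_rev ?size_map ?size_iota // (nth_map 0%N) ?size_iota; last by move: hi; lia.
rewrite nth_iota; last by move: hi; lia.
by congr (_ - nth _ _ _)%N; move: hi; lia.
Qed.

Lemma sorted_bl m n mu : sorted geq mu -> sorted geq (bl m n mu).
Proof.
move=> Hs; apply/(sortedP 0) => i; rewrite /bl size_rev size_map size_iota => hi.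
rewrite /= !nth_bl ?(ltnW hi) //; apply: leq_sub2l; apply: snth_dec => //; lia.
Qed.

Lemma box_compl_nth m n mu i : sorted geq mu -> (i < m)%N ->
  nth 0 (box_compl m n mu) i = (n - nth 0 mu (m.-1 - i))%N.
Proof.
move=> Hs hi; rewrite /box_compl -/(bl m n mu) nth_filter_pos ?nth_bl //.
exact: sorted_bl.
Qed.

Lemma box_compl_sorted m n mu : sorted geq mu -> sorted geq (box_compl m n mu).
Proof.
move=> Hs; rewrite /box_compl -/(bl m n mu); apply: sorted_filter; last exact: sorted_bl.
by move=> a b c /= h1 h2; apply: leq_trans h2 h1.
Qed.

Lemma box_compl_size m n mu : (size (box_compl m n mu) <= m)%N.
Proof.
rewrite /box_compl size_filter; apply: leq_trans (count_size _ _) _.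
by rewrite size_rev size_map size_iota.
Qed.

Lemma box_compl_psize m n mu : sorted geq mu -> (size mu <= m)%N ->
  (forall i, nth 0 mu i <= n)%N ->
  (psize (box_compl m n mu) + psize mu = m * n)%N.
Proof.
move=> Hs hm hn.
rewrite -(sum_nth_k hm) /psize /box_compl sumn_filter_pos sumn_rev sumnE big_map.
rewrite -(big_mkord xpredT (fun i => nth 0 mu i)).
have -> : iota 0 m = index_iota 0 m by rewrite /index_iota subn0.
rewrite -big_split /= big_mkord.
rewrite (eq_bigr (fun _ => n)); last by move=> i _; rewrite subnK.
by rewrite sum_nat_const card_ord.
Qed.

Lemma Gp_ext m (x y : nat -> rat) i : (forall j, (j < m)%N -> x j = y j) -> (i < m)%N ->
  Gp m x i = Gp m y i.
Proof.
by move=> H hi; apply: eq_bigr => j _; rewrite !H.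
Qed.

Lemma gp_prod m (x : nat -> rat) (c : rat) : (0 < m)%N ->
  (forall j, (0 < j)%N -> (j < m)%N -> x 0%N - x j != 0 /\ x 0%N + 1 - x j != 0) ->
  Gp m (fun j => if j == 0%N then x 0%N + 1 else x j) 0 * Gp m (fun j => c - x (m.-1 - j)%N) m.-1 = 1.
Proof.
move=> hm H.
rewrite /Gp [X in _ * X](reindex_inj rev_ord_inj) /=.
rewrite (eq_big (fun j : 'I_m => (j : nat) != 0%N)
   (fun j : 'I_m => gg (c - x 0%N) (c - x j)) (P1 := fun j : 'I_m => (m - j.+1)%N != m.-1)); first last.
- move=> j _; congr (gg _ (_ - x _)); first by rewrite subnn.
  by have := ltn_ord j; lia.
- by move=> j; have := ltn_ord j; case: (j : nat) => [|j'] /=; lia.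
rewrite -big_split /=; apply: big1 => j hj.
have hj0 : (0 < j)%N by rewrite lt0n.
rewrite (negbTE hj).
have [h1 h2] := H j hj0 (ltn_ord j).
rewrite /gg.
have h3 : c - x 0%N - (c - x j) != 0.
  by rewrite (_ : c - x 0%N - (c - x j) = - (x 0%N - x j)) ?oppr_eq0 //; ring.
have h4 : x 0%N + 1 - x j - 1 != 0.
  by rewrite (_ : x 0%N + 1 - x j - 1 = x 0%N - x j) //; ring.
field; by rewrite h2 h3.
Qed.

Lemma nth_lplus la i : nth 0%N (lplus la) i = (nth 0%N la i + (i == 0%N))%N.
Proof. case: la => [|b s]; case: i => [|i] //=; rewrite ?addn0 ?addn1 // nth_nil //. Qed.

Lemma size_lplus la : size (lplus la) = maxn 1 (size la).
Proof. by case: la => [|b s] //=; rewrite (maxn_idPr _). Qed.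

Lemma psize_lplus la : psize (lplus la) = (psize la).+1.
Proof. by case: la => [|b s] //=; rewrite addSn. Qed.

Lemma sorted_lplus la : sorted geq la -> sorted geq (lplus la).
Proof.
move=> Hs; apply/(sortedP 0%N) => i _; rewrite /= !nth_lplus.
have := snth_dec Hs (leqnSn i); lia.
Qed.

Lemma lplus_facts m n la : is_partition la -> diag_sub (lplus la) (box m n) ->
  [/\ (0 < m)%N, (nth 0%N la 0 < n)%N & (size la <= m)%N].
Proof.
move=> /andP [Hs Hpos] Hd.
have := Hd (1%N, (nth 0%N la 0).+1).
rewrite /in_diag /box /= size_nseq nth_nseq nth_lplus size_lplus addn1 leqnn /=.
rewrite leq_max ltnSn /= => /(_ isT) /andP [hm hn].
split => //.
  by move: hn; case: ifP.
case: (posnP (size la)) => [->|hs0] //.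
have := Hd (size la, 1%N).
rewrite /in_diag /box /= size_nseq size_lplus leq_max leqnn orbT hs0 /=.
rewrite nth_lplus.
have : (0 < nth 0%N la (size la).-1)%N.
  by apply: (all_nthP 0%N Hpos); rewrite prednK.
by move=> h; rewrite (leq_trans h (leq_addr _ _)) => /(_ isT) /andP [].
Qed.

Theorem mainTheorem5 (m n : nat) (la : seq nat) :
  is_partition la ->
  diag_sub (lplus la) (box m n) ->
  ((f_syt la)%:R * (f_syt (box_compl m n (lplus la)))%:R)
    / ((f_syt (lplus la))%:R * (f_syt (box_compl m n la))%:R)
  = ((m + part1 la)%:R * ((n%:R : rat) - (part1 la)%:R))
    / (((psize la).+1)%:R * ((m * n)%:R - (psize la)%:R)).
Proof.
move=> Hp Hd.
have [hm hn hsz] := lplus_facts Hp Hd.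
case/andP: (Hp) => Hs Hpos.
have ha : part1 la = nth 0%N la 0 by case: (la).
rewrite ha !f_syt_cnt.
set a := nth 0%N la 0 in hn *.
set lp := lplus la.
set b := box_compl m n la.
set bp := box_compl m n lp.
have Hsp : sorted geq lp := sorted_lplus Hs.
have hszp : (size lp <= m)%N by rewrite size_lplus geq_max hm hsz.
have hle : forall i, (nth 0%N la i <= a)%N by move=> i; apply: snth_dec.
have hlen : forall i, (nth 0%N la i <= n)%N by move=> i; apply: leq_trans (hle i) (ltnW hn).
have hlepn : forall i, (nth 0%N lp i <= n)%N.
  move=> i; rewrite nth_lplus; case: i => [|i] /=; first by rewrite addn1.
  by rewrite addn0.
have Hsb : sorted geq b := box_compl_sorted m n Hs.
have Hsbp : sorted geq bp := box_compl_sorted m n Hsp.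
have Pb := box_compl_psize Hs hsz hlen.
have Pbp := box_compl_psize Hsp hszp hlepn.
rewrite -/b -/bp psize_lplus in Pb Pbp.
set N := psize la in Pb Pbp *.
set M := psize bp in Pbp *.
have PbM : psize b = M.+1 by move: Pb Pbp; lia.
have E1 := frob Hs hsz (erefl (psize la)).
have E2 := frob Hsp hszp (erefl (psize lp)).
have E3 := frob Hsb (box_compl_size m n la) (erefl (psize b)).
have E4 := frob Hsbp (box_compl_size m n lp) (erefl (psize bp)).
rewrite -/N in E1; rewrite /lp psize_lplus -/lp -/N in E2 *.
rewrite PbM in E3 *; rewrite -/M in E4 *.
set F1 := (cnt N la)%:R in E1 *.
set F2 := (cnt N.+1 lp)%:R in E2 *.
set F3 := (cnt M.+1 b)%:R in E3 *.
set F4 := (cnt M bp)%:R in E4 *.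

set X := lvr m la. set Xp := lvr m lp. set Y := lvr m b. set Yp := lvr m bp.
set P1 := \prod_(i < m) ((lv m la i)`!)%:R in E1.
set P2 := \prod_(i < m) ((lv m lp i)`!)%:R in E2.
set P3 := \prod_(i < m) ((lv m b i)`!)%:R in E3.
set P4 := \prod_(i < m) ((lv m bp i)`!)%:R in E4.
have hm1 : (m.-1 < m)%N by rewrite prednK.
have L1 : forall j, lv m lp j = (lv m la j + (j == 0%N))%N.
  by move=> j; rewrite /lv nth_lplus addnAC.
have L2 : forall j, (j < m)%N -> (lv m b j + lv m la (m.-1 - j) = n + m.-1)%N.
  move=> j hj; rewrite /lv box_compl_nth //.
  have := hlen (m.-1 - j)%N; move: hj hm; lia.
have L3 : forall j, (j < m)%N -> (lv m bp j + (j == m.-1) = lv m b j)%N.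
  move=> j hj; rewrite /lv !box_compl_nth // nth_lplus.
  have := hlen (m.-1 - j)%N.
  case: (eqVneq j m.-1) => [ej|nej] /=.
    rewrite ej subnn /= -/a; move: hn; lia.
  have -> : (m.-1 - j == 0)%N = false by apply/negbTE; move: nej hj; lia.
  lia.
have L4 : lv m b m.-1 = (n - a)%N.
  by rewrite /lv box_compl_nth // subnn addn0.
have L5 : (lv m la 0).+1 = (m + a)%N.
  by rewrite /lv -/a; move: hm; lia.
have R3 : P2 = ((lv m la 0).+1)%:R * P1.
  rewrite /P2 /P1 (bigD1 (Ordinal hm)) //= [in RHS](bigD1 (Ordinal hm)) //= mulrA.
  congr (_ * _).
    by rewrite L1 addn1 factS natrM.
  apply: eq_bigr => i hi; rewrite L1.
  by move: hi; rewrite -(inj_eq val_inj) /= => /negbTE ->; rewrite addn0.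
have R4 : P3 = (lv m b m.-1)%:R * P4.
  rewrite /P3 /P4 (bigD1 (Ordinal hm1)) //= [in RHS](bigD1 (Ordinal hm1)) //= mulrA.
  congr (_ * _).
    by rewrite -(L3 _ hm1) eqxx addn1 factS natrM.
  apply: eq_bigr => i hi; rewrite -(L3 _ (ltn_ord i)).
  by move: hi; rewrite -(inj_eq val_inj) /= => /negbTE ->; rewrite addn0.
have HdXp := lvr_distinct (k:=m) Hsp.
have HdY := lvr_distinct (k:=m) Hsb.
have R1 : Dk m X = Dk m Xp * Gp m Xp 0.
  rewrite -Dk_shift //; apply: Dk_ext => j hj.
  rewrite /decf /X /Xp /lvr L1; case: eqP => [->|_] /=; last by rewrite addn0.
  by rewrite natrD addrK.
have R2 : Dk m Yp = Dk m Y * Gp m Y m.-1.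
  rewrite -Dk_shift //; apply: Dk_ext => j hj.
  rewrite /decf /Y /Yp /lvr -(L3 _ hj); case: eqP => [->|_] /=; last by rewrite addn0.
  by rewrite natrD addrK.
have R5 : Gp m Xp 0 * Gp m Y m.-1 = 1.
  rewrite (@Gp_ext m Xp (fun j => if j == 0%N then X 0%N + 1 else X j)) //; last first.
    move=> j hj; rewrite /Xp /X /lvr L1; case: eqP => [->|_] /=; last by rewrite addn0.
    by rewrite addn1 -natr1.
  rewrite (@Gp_ext m Y (fun j => (n + m.-1)%:R - X (m.-1 - j)%N) m.-1) //; last first.
    by move=> j hj; rewrite /Y /X /lvr -(L2 _ hj) natrD addrK.
  apply: gp_prod => // j hj0 hjm.
  have hlt := lv_dist (k:=m) Hs hj0 hjm.
  rewrite /X /lvr natr1 !subr_eq0 !eqr_nat; split.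
    by rewrite gtn_eqF.
  by rewrite gtn_eqF // ltnW.
have nzP : forall k (nu : seq nat), \prod_(i < k) ((lv k nu i)`!)%:R != 0 :> rat.
  move=> k nu; rewrite -natr_prod pnatr_eq0 -lt0n prodn_gt0 // => i; exact: fact_gt0.
have nzP1 : P1 != 0 by apply: nzP.
have nzP4 : P4 != 0 by apply: nzP.
have nzDXp : Dk m Xp != 0 by apply: Dk_neq0.
have nzDY : Dk m Y != 0 by apply: Dk_neq0.
have nzG2 : Gp m Y m.-1 != 0.
  by apply/negP => /eqP e; move: R5; rewrite e mulr0 => /eqP; rewrite eq_sym oner_eq0.
have eG : Gp m Xp 0 = (Gp m Y m.-1)^-1.
  by rewrite -[LHS]mulr1 -(mulfV nzG2) mulrA R5 mul1r.
have eF1 : F1 = (N`!)%:R * Dk m X / P1 by rewrite -E1 mulfK.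
have eF2 : F2 = ((N.+1)`!)%:R * Dk m Xp / P2.
  by rewrite -E2 mulfK // R3 mulf_neq0 // pnatr_eq0.
have eF3 : F3 = ((M.+1)`!)%:R * Dk m Y / P3.
  by rewrite -E3 mulfK // R4 mulf_neq0 // L4 pnatr_eq0 subn_eq0 -ltnNge.
have eF4 : F4 = (M`!)%:R * Dk m Yp / P4 by rewrite -E4 mulfK.
have eR : ((m * n)%:R - N%:R : rat) = (M.+1)%:R.
  by rewrite -Pb natrD addrK PbM.
have eA : (n%:R - a%:R : rat) = (lv m b m.-1)%:R by rewrite L4 natrB // ltnW.
have eB : ((m + a)%:R : rat) = ((lv m la 0).+1)%:R by rewrite L5.
rewrite eR eA eB eF1 eF2 eF3 eF4 R1 R2 R3 R4 eG !factS !natrM.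
have nzL4 : (lv m b m.-1)%:R != 0 :> rat by rewrite L4 pnatr_eq0 subn_eq0 -ltnNge.
have nzN : (N`!)%:R != 0 :> rat by rewrite pnatr_eq0 -lt0n fact_gt0.
have nzM : (M`!)%:R != 0 :> rat by rewrite pnatr_eq0 -lt0n fact_gt0.
field.
rewrite !(addrC 1) !natr1 !pnatr_eq0 ?nzP4 ?nzP1 ?nzDY ?nzDXp ?nzG2 /=.
by rewrite L4 subn_eq0 -ltnNge hn -lt0n fact_gt0 /= -lt0n fact_gt0.
Qed.
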